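(* Let $b<1$, $\delta\in(0,1)$, $\rho\in(\max\{0,b\},1)$, $R>0$, $R_0>0$, $\kappa\in(0,1)$ and $t\ge0$. Then $$\Big(1-\frac{\kappa}{R}+\xi\Big)^{1-\rho}\Big(1-\Big(\frac{R_0}{R}\Big)^{\delta}\frac{e^{-\delta t}}{\big(1-\frac{\kappa}{R}+\xi\big)^{\delta}}\Big)\ge\Big(1-\Big(\frac{R_0}{R}\Big)^{\delta}e^{-\delta t}\Big)-\Big|\xi-\frac{\kappa}{R}\Big|$$ holds for every $\xi\in\big[\frac{R_0}{R}e^{-t}-1+\frac{\kappa}{R},\frac{\kappa}{R}\big]$. *)

(* Defs.v *)
From Stdlib Require Export Reals.

(* Main.v *)
Require Import Defs.
From Stdlib Require Import Lra Psatz.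
Open Scope R_scope.

Lemma ln_le' x y : 0 < x -> x <= y -> ln x <= ln y.
Proof. intros hx [h|h]; [left; apply ln_increasing; auto | subst; lra]. Qed.
Lemma exp_le' x y : x <= y -> exp x <= exp y.
Proof. intros [h|h]; [left; apply exp_increasing; auto | subst; lra]. Qed.

Theorem lemma2p19 (b delta rho Rr R0 kappa t : R)
  (hb : b < 1) (hdelta : 0 < delta < 1)
  (hrho : Rmax 0 b < rho < 1) (hR : 0 < Rr) (hR0 : 0 < R0)
  (hkappa : 0 < kappa < 1) (ht : 0 <= t) :
  forall xi : R,
    R0 / Rr * exp (- t) - 1 + kappa / Rr <= xi <= kappa / Rr ->
    Rpower (1 - kappa / Rr + xi) (1 - rho) *
      (1 - Rpower (R0 / Rr) delta * exp (- delta * t)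
             / Rpower (1 - kappa / Rr + xi) delta)
    >= (1 - Rpower (R0 / Rr) delta * exp (- delta * t)) - Rabs (xi - kappa / Rr).
Proof.
  intros xi [h1 h2].
  assert (hrho0 : 0 < rho) by (pose proof (Rmax_l 0 b); lra).
  set (a := R0 / Rr * exp (- t)).
  assert (ha : 0 < a) by (unfold a; apply Rmult_lt_0_compat;
    [apply Rdiv_lt_0_compat; lra | apply exp_pos]).
  set (y := 1 - kappa / Rr + xi).
  assert (hy : a <= y <= 1) by (unfold y; fold a in h1; lra).
  assert (hyp : 0 < y) by lra.
  assert (Habs : Rabs (xi - kappa / Rr) = 1 - y).
  { rewrite Rabs_left1; unfold y; lra. }
  rewrite Habs.
  assert (Hc : Rpower (R0 / Rr) delta * exp (- delta * t) = exp (delta * ln a)).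
  { unfold Rpower, a. rewrite ln_mult; [| apply Rdiv_lt_0_compat; lra | apply exp_pos].
    rewrite ln_exp, <- exp_plus. f_equal. ring. }
  rewrite Hc. unfold Rpower.
  set (c := exp (delta * ln a)).
  set (p := exp ((1 - rho) * ln y)).
  set (q := exp (delta * ln y)).
  assert (hly : ln y <= 0) by (rewrite <- ln_1; apply ln_le'; lra).
  assert (hla : ln a <= ln y) by (apply ln_le'; lra).
  assert (hc0 : 0 < c) by apply exp_pos.
  assert (hq0 : 0 < q) by apply exp_pos.
  assert (hpy : y <= p).
  { unfold p. rewrite <- (exp_ln y) at 1 by lra. apply exp_le'. nra. }
  assert (hqc : c <= q).
  { unfold c, q. apply exp_le'. nra. }
  assert (hyq : y <= q).
  { unfold q. rewrite <- (exp_ln y) at 1 by lra. apply exp_le'. nra. }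
  assert (hf : 0 <= 1 - c / q).
  { assert (c / q <= 1).
    { apply (Rmult_le_reg_r q); [lra|]. unfold Rdiv. rewrite Rmult_assoc, Rinv_l; lra. }
    lra. }
  assert (hcq : y * (c / q) <= c).
  { unfold Rdiv. rewrite <- Rmult_assoc, (Rmult_comm y c), Rmult_assoc.
    rewrite <- (Rmult_1_r c) at 2. apply Rmult_le_compat_l; [lra|].
    apply (Rmult_le_reg_r q); [lra|]. rewrite Rmult_assoc, Rinv_l; lra. }
  apply Rle_ge.
  apply Rle_trans with (y * (1 - c / q)); [nra|].
  apply Rmult_le_compat_r; lra.
Qed.
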